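(* Let $(b,c)$ be a connected weighted graph over $X$ with $c\equiv0$. Then, pointwise on $X\times X$, $$\varrho=\sup\{\sigma:\ \sigma \text{ is a pseudometric on }X\text{ intrinsic with respect to some measure } m \text{ on } X \text{ with } m(X)\le1\}.$$
   Context: Let $X$ be a countably infinite set. A weighted graph $(b,c)$ over $X$ consists of a symmetric $b:X\times X\to[0,\infty)$ with $b(x,x)=0$ and $\sum_{y}b(x,y)<\infty$ for all $x$, and $c:X\to[0,\infty)$. A path is a finite sequence of pairwise distinct vertices with $b(x_{i-1},x_i)>0$ for consecutive vertices; the graph is connected if any two distinct vertices are joined by a path. For $f:X\to\mathbb C$ let $\widetilde Q(f)=\frac12\sum_{x,y}b(x,y)|f(x)-f(y)|^2+\sum_x c(x)|f(x)|^2\in[0,\infty]$, $\widetilde D=\{f:\widetilde Q(f)<\infty\}$, and $\varrho(x,y)=\sup\{|f(x)-f(y)|:f\in\widetilde D,\ \widetilde Q(f)\le1\}$. A measure on $X$ is a function $m:X\to[0,\infty)$ with $m(A)=\sum_{x\in A}m(x)$. A pseudometric $\sigma$ on $X$ is intrinsic with respect to $m$ if $\frac12\sum_{y}b(x,y)\sigma(x,y)^2\le m(x)$ for all $x\in X$. *)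

(* Defs.v *)
From Stdlib Require Import Reals Lra List.
Import ListNotations.
Open Scope R_scope.

Fixpoint psum (g : nat -> R) (N : nat) : R :=
  match N with
  | O => 0
  | S n => psum g n + g n
  end.

Definition enumeration (X : Type) (e : nat -> X) : Prop :=
  (forall x : X, exists n, e n = x) /\ (forall n k, e n = e k -> n = k).

(* For a nonnegative family g on X, "sum_{x in X} g x <= M" (in [0,oo]):
   all finite partial sums along the enumeration are bounded by M. *)
Definition sum_le {X : Type} (e : nat -> X) (g : X -> R) (M : R) : Prop :=
  forall N, psum (fun i => g (e i)) N <= M.

Definition weighted_graph {X : Type} (e : nat -> X)
  (b : X -> X -> R) (c : X -> R) : Prop :=
  (forall x y, 0 <= b x y) /\ (forall x y, b x y = b y x) /\
  (forall x, b x x = 0) /\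
  (forall x, exists M, sum_le e (fun y => b x y) M) /\
  (forall x, 0 <= c x).

Fixpoint edge_chain {X : Type} (b : X -> X -> R) (x : X) (l : list X) : Prop :=
  match l with
  | [] => True
  | y :: l' => 0 < b x y /\ edge_chain b y l'
  end.

Definition is_path {X : Type} (b : X -> X -> R) (x y : X) (l : list X) : Prop :=
  NoDup (x :: l) /\ last (x :: l) x = y /\ edge_chain b x l.

Definition connected {X : Type} (b : X -> X -> R) : Prop :=
  forall x y : X, x <> y -> exists l, is_path b x y l.

(* Complex-valued functions f = u + i v on X, represented by (u, v). *)
Definition cfun (X : Type) : Type := ((X -> R) * (X -> R))%type.

Definition cabs2 {X : Type} (f : cfun X) (x : X) : R :=
  (fst f x) ^ 2 + (snd f x) ^ 2.

Definition cdiff_abs2 {X : Type} (f : cfun X) (x y : X) : R :=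
  (fst f x - fst f y) ^ 2 + (snd f x - snd f y) ^ 2.

Definition cdiff_abs {X : Type} (f : cfun X) (x y : X) : R :=
  sqrt (cdiff_abs2 f x y).

(* "Qtilde(f) <= M" in [0,oo]: every finite partial sum of the
   nonnegative series defining Qtilde(f) is bounded by M. *)
Definition Qt_le {X : Type} (e : nat -> X) (b : X -> X -> R) (c : X -> R)
  (f : cfun X) (M : R) : Prop :=
  forall N,
    / 2 * psum (fun i => psum (fun j =>
              b (e i) (e j) * cdiff_abs2 f (e i) (e j)) N) N
    + psum (fun i => c (e i) * cabs2 f (e i)) N <= M.

(* The set whose supremum is rho(x,y):
   { |f(x)-f(y)| : f in Dtilde, Qtilde(f) <= 1 }. *)
Definition rho_set {X : Type} (e : nat -> X) (b : X -> X -> R) (c : X -> R)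
  (x y : X) (r : R) : Prop :=
  exists f : cfun X, Qt_le e b c f 1 /\ r = cdiff_abs f x y.

Definition pseudometric {X : Type} (s : X -> X -> R) : Prop :=
  (forall x y, 0 <= s x y) /\ (forall x, s x x = 0) /\
  (forall x y, s x y = s y x) /\
  (forall x y z, s x z <= s x y + s y z).

Definition measure {X : Type} (m : X -> R) : Prop := forall x, 0 <= m x.

Definition intrinsic {X : Type} (e : nat -> X) (b : X -> X -> R)
  (m : X -> R) (s : X -> X -> R) : Prop :=
  forall x, sum_le e (fun y => / 2 * (b x y * (s x y) ^ 2)) (m x).

Definition intr_set {X : Type} (e : nat -> X) (b : X -> X -> R)
  (x y : X) (r : R) : Prop :=
  exists (s : X -> X -> R) (m : X -> R),
    pseudometric s /\ measure m /\ sum_le e m 1 /\ intrinsic e b m s /\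
    r = s x y.

(* Main.v *)
Require Import Defs.
From Stdlib Require Import Reals.
From Stdlib Require Import Lra Psatz.
Open Scope R_scope.

Lemma psum_nonneg (g : nat -> R) N : (forall i, 0 <= g i) -> 0 <= psum g N.
Proof. intro H; induction N; simpl; [lra|]. specialize (H N); lra. Qed.

Lemma psum_mono (g : nat -> R) N K : (forall i, 0 <= g i) -> (N <= K)%nat ->
  psum g N <= psum g K.
Proof. intros H Hle; induction Hle; simpl; [lra|]. specialize (H m); lra. Qed.

Lemma psum_le (g h : nat -> R) N : (forall i, g i <= h i) -> psum g N <= psum h N.
Proof. intro H; induction N; simpl; [lra|]. specialize (H N); lra. Qed.

Lemma psum_scal (g : nat -> R) k N : psum (fun i => k * g i) N = k * psum g N.
Proof. induction N; simpl; [ring|]. rewrite IHN; ring. Qed.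

Lemma psum_zero N : psum (fun _ => 0) N = 0.
Proof. induction N; simpl; [|rewrite IHN]; ring. Qed.

Lemma psum_term (g : nat -> R) k N : (forall i, 0 <= g i) -> (k < N)%nat ->
  g k <= psum g N.
Proof.
  intros H Hk. induction Hk; simpl.
  - pose proof (psum_nonneg g k H); lra.
  - specialize (H m); lra.
Qed.

Lemma psum_ext (g h : nat -> R) N : (forall i, g i = h i) -> psum g N = psum h N.
Proof. intro H; induction N; simpl; [|rewrite IHN, H]; auto. Qed.

Lemma cdiff_abs2_nonneg {X} (f : cfun X) x y : 0 <= cdiff_abs2 f x y.
Proof. unfold cdiff_abs2. pose proof (pow2_ge_0 (fst f x - fst f y)); pose proof (pow2_ge_0 (snd f x - snd f y)); lra. Qed.

Lemma cdiff_abs_sq {X} (f : cfun X) x y : (cdiff_abs f x y) ^ 2 = cdiff_abs2 f x y.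
Proof. unfold cdiff_abs. simpl. rewrite Rmult_1_r. apply sqrt_sqrt. apply cdiff_abs2_nonneg. Qed.

Lemma tri2 a b c d :
  sqrt ((a + c) ^ 2 + (b + d) ^ 2) <= sqrt (a ^ 2 + b ^ 2) + sqrt (c ^ 2 + d ^ 2).
Proof.
  set (B := a ^ 2 + b ^ 2). set (C := c ^ 2 + d ^ 2).
  assert (HB : 0 <= B) by (unfold B; nra).
  assert (HC : 0 <= C) by (unfold C; nra).
  assert (Hcs : a * c + b * d <= sqrt B * sqrt C).
  { rewrite <- sqrt_mult by auto.
    assert (Rabs (a*c+b*d) <= sqrt (B*C)).
    { rewrite <- sqrt_Rsqr_abs. apply sqrt_le_1_alt. unfold Rsqr, B, C. pose proof (pow2_ge_0 (a*d-b*c)). nra. }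
    pose proof (Rle_abs (a*c+b*d)); lra. }
  rewrite <- (sqrt_Rsqr (sqrt B + sqrt C)).
  2:{ pose proof (sqrt_pos B); pose proof (sqrt_pos C); lra. }
  apply sqrt_le_1_alt. unfold Rsqr.
  pose proof (sqrt_sqrt B HB); pose proof (sqrt_sqrt C HC).
  unfold B, C in *. nra.
Qed.

Lemma cdiff_pseudo {X} (f : cfun X) : pseudometric (cdiff_abs f).
Proof.
  unfold pseudometric, cdiff_abs, cdiff_abs2. repeat split.
  - intros; apply sqrt_pos.
  - intros; replace (_ + _) with 0 by ring; apply sqrt_0.
  - intros; f_equal; ring.
  - intros x y z.
    replace (fst f x - fst f z) with ((fst f x - fst f y) + (fst f y - fst f z)) by ring.
    replace (snd f x - snd f z) with ((snd f x - snd f y) + (snd f y - snd f z)) by ring.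
    apply tri2.
Qed.

Lemma un_cv_psum (s : nat -> nat -> R) (l : nat -> R) N :
  (forall i, Un_cv (s i) (l i)) ->
  Un_cv (fun M => psum (fun i => s i M) N) (psum l N).
Proof.
  intro H; induction N; simpl.
  - intros eps Heps; exists 0%nat; intros; unfold Rdist; rewrite Rminus_diag, Rabs_R0; lra.
  - apply CV_plus; auto.
Qed.

Theorem mainTheorem4 (X : Type) (e : nat -> X) (b : X -> X -> R) (c : X -> R) :
  enumeration X e ->
  weighted_graph e b c ->
  connected b ->
  (forall x, c x = 0) ->
  forall (x y : X) (r : R),
    is_upper_bound (rho_set e b c x y) r <->
    is_upper_bound (intr_set e b x y) r.
Proof.
  intros [Hsurj _] [Hb0 [Hbs _]] _ Hc x y r. split.
  - intros Hub t [s [m [Hs [Hm [Hm1 [Hint ->]]]]]].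
    destruct Hs as [Hs0 [Hss [Hsym Htri]]].
    apply Hub. exists (fun z => s x z, fun _ => 0). split.
    2:{ unfold cdiff_abs, cdiff_abs2; cbn [fst snd]. rewrite Hss.
        replace ((0 - s x y) ^ 2 + (0 - 0) ^ 2) with (s x y * s x y) by ring.
        rewrite sqrt_square; auto. }
    intro N.
    rewrite (psum_ext (fun i => c (e i) * _) (fun _ => 0)) by (intro; rewrite Hc; ring).
    rewrite psum_zero, Rplus_0_r.
    rewrite <- psum_scal.
    apply Rle_trans with (psum (fun i => m (e i)) N); [|apply Hm1].
    apply psum_le; intro i. rewrite <- psum_scal.
    eapply Rle_trans; [|apply (Hint (e i) N)].
    apply psum_le; intro j. unfold cdiff_abs2; cbn [fst snd].
    apply Rmult_le_compat_l; [lra|]. apply Rmult_le_compat_l; [apply Hb0|].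
    assert (h1 := Htri x (e i) (e j)). assert (h2 := Htri x (e j) (e i)).
    rewrite (Hsym (e j) (e i)) in h2.
    assert (Rabs (s x (e i) - s x (e j)) <= s (e i) (e j)) by (apply Rabs_le; lra).
    replace ((s x (e i) - s x (e j)) ^ 2 + (0 - 0) ^ 2)
      with (Rabs (s x (e i) - s x (e j)) * Rabs (s x (e i) - s x (e j))).
    2:{ rewrite <- Rabs_mult, Rabs_right; [ring|]. apply Rle_ge. pose proof (Rle_0_sqr (s x (e i) - s x (e j))). unfold Rsqr in *. lra. }
    pose proof (Rabs_pos (s x (e i) - s x (e j))). simpl. nra.
  - intros Hub t [f [Hf ->]].
    set (g := fun z j => / 2 * (b z (e j) * (cdiff_abs f z (e j)) ^ 2)).
    assert (Hg0 : forall z j, 0 <= g z j).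
    { intros; unfold g. pose proof (Hb0 z (e j)). pose proof (pow2_ge_0 (cdiff_abs f z (e j))). nra. }
    set (a := fun i j => b (e i) (e j) * cdiff_abs2 f (e i) (e j)).
    assert (Ha0 : forall i j, 0 <= a i j).
    { intros; unfold a. pose proof (Hb0 (e i) (e j)). pose proof (cdiff_abs2_nonneg f (e i) (e j)). nra. }
    assert (Hrow0 : forall i, forall j, 0 <= psum (a i) j) by (intros; apply psum_nonneg; auto).
    assert (HQ : forall K, / 2 * psum (fun i => psum (a i) K) K <= 1).
    { intro K. pose proof (Hf K) as H. unfold a.
      rewrite (psum_ext (fun i => c (e i) * _) (fun _ => 0)) in H by (intro; rewrite Hc; ring).
      rewrite psum_zero in H. lra. }
    assert (Hdbl : forall N M, / 2 * psum (fun i => psum (a i) M) N <= 1).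
    { intros N M. set (K := max N M).
      eapply Rle_trans; [|apply (HQ K)]. apply Rmult_le_compat_l; [lra|].
      apply Rle_trans with (psum (fun i => psum (a i) M) K).
      - apply psum_mono; [auto|apply Nat.le_max_l].
      - apply psum_le; intro i. apply psum_mono; [auto|apply Nat.le_max_r]. }
    assert (Hgi : forall i M, psum (g (e i)) M = / 2 * psum (a i) M).
    { intros; rewrite <- psum_scal. apply psum_ext; intro j. unfold g, a.
      rewrite cdiff_abs_sq; ring. }
    assert (Hgrow : forall z, Un_growing (fun M => psum (g z) M)).
    { intros z n; simpl. pose proof (Hg0 z n); lra. }
    assert (Hbnd : forall z, has_ub (fun M => psum (g z) M)).
    { intro z. exists 1. intros v [M ->]. destruct (Hsurj z) as [k <-].
      rewrite Hgi. eapply Rle_trans; [|apply (Hdbl (S k) M)].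
      apply Rmult_le_compat_l; [lra|]. apply (psum_term (fun i => psum (a i) M)); auto. }
    set (m := fun z => proj1_sig (growing_cv _ (Hgrow z) (Hbnd z))).
    assert (Hmcv : forall z, Un_cv (fun M => psum (g z) M) (m z)).
    { intro z; unfold m; destruct (growing_cv _ _ _); auto. }
    apply Hub. exists (cdiff_abs f), m. refine (conj (cdiff_pseudo f) (conj _ (conj _ (conj _ eq_refl)))).
    + intro z. apply Rle_trans with (psum (g z) 0); [simpl; lra|].
      apply growing_ineq; auto.
    + intro N. apply Rle_cv_lim with (Un := fun M => psum (fun i => psum (g (e i)) M) N)
                               (Vn := fun _ => 1).
      * intro M. rewrite (psum_ext _ (fun i => / 2 * psum (a i) M)) by (intro; apply Hgi).
        rewrite psum_scal. apply Hdbl.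
      * apply (un_cv_psum (fun i M => psum (g (e i)) M) (fun i => m (e i))).
        intro; apply Hmcv.
      * intros eps Heps; exists 0%nat; intros; unfold Rdist; rewrite Rminus_diag, Rabs_R0; lra.
    + intros z N. apply (growing_ineq (fun M => psum (g z) M)); auto.
Qed.
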